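(* Let $(X,\ast,u,d)$ be a finite block GL-rack and $c$ the size of each of its blocks. Then for every oriented Legendrian knot $K$, $\operatorname{Col}_X(K)$ is divisible by $c$.
   Context: A rack is a set $X$ with a binary operation $\ast$ such that for every $y\in X$ the map $x\mapsto x\ast y$ is a bijection of $X$ and $(x\ast y)\ast z=(x\ast z)\ast(y\ast z)$ for all $x,y,z$. A GL-rack is a quadruple $(X,\ast,u,d)$ where $(X,\ast)$ is a rack and $u,d\colon X\to X$ are maps such that for all $x,y\in X$: $u(d(x\ast x))=d(u(x\ast x))=x$; $u(x\ast y)=u(x)\ast y$ and $d(x\ast y)=d(x)\ast y$; $x\ast u(y)=x\ast d(y)=x\ast y$. The diagonal map is $\Delta(x)=x\ast x$; for finite $X$ it is a bijection with $\Delta=(u\circ d)^{-1}$. A finite GL-rack is a block GL-rack if all cycles in the disjoint cycle decomposition of $\Delta$ (fixed points counted as $1$-cycles) have the same length $c$; the supports of these cycles are the blocks. Legendrian knots in $(\mathbb{R}^3,\xi_{\mathrm{std}})$ are represented by oriented front diagrams. Given a finite GL-rack $X$ and a front diagram $D$ of $K$, a coloring is an assignment of elements of $X$ to the semi-arcs of $D$ (segments bounded by undercrossings or cusps) such that, following the orientation through a cusp, the color changes from $x$ to $u(x)$ if the cusp is traversed upward and to $d(x)$ if traversed downward; and at each crossing whose over-strand is colored $y$, if the under semi-arc on the right of the oriented over-strand is colored $x$, the one on its left is colored $x\ast y$. $\operatorname{Col}_X(K)$ is the number of colorings (a Legendrian isotopy invariant, equal to $|\operatorname{Hom}(\operatorname{GLR}(K),X)|$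 for the fundamental GL-rack $\operatorname{GLR}(K)$). *)

(* Defs.v *)
From HB Require Import structures.
From mathcomp Require Import all_boot.
Set Implicit Arguments. Unset Strict Implicit. Unset Printing Implicit Defensive.

Definition is_rack (X : Type) (op : X -> X -> X) : Prop :=
  (forall y : X, bijective (fun x => op x y)) /\
  (forall x y z : X, op (op x y) z = op (op x z) (op y z)).

Definition is_GLrack (X : Type) (op : X -> X -> X) (u d : X -> X) : Prop :=
  [/\ is_rack op,
      (forall x, u (d (op x x)) = x /\ d (u (op x x)) = x),
      (forall x y, u (op x y) = op (u x) y /\ d (op x y) = op (d x) y) &
      (forall x y, op x (u y) = op x y /\ op x (d y) = op x y)].

Definition diag (X : Type) (op : X -> X -> X) : X -> X := fun x => op x x.

(* A finite GL-rack is a block GL-rack with blocks of size c when every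
   cycle of Delta has length c ([order f x] is the size of the f-orbit
   of x, see fingraph.v). *)
Definition block_GLrack_of_size (X : finType) (op : X -> X -> X) (c : nat) : Prop :=
  forall x : X, order (diag op) x = c.

(* Front diagrams, encoded by their left-to-right (Morse) slicing.    *)
(* Strands in a vertical slice are numbered 0,1,... from bottom (small *)
(* z) to top.  An event is                                            *)
(*   LCusp i : a left cusp creating two new strands at positions i,i+1 *)
(*   RCusp i : a right cusp joining the strands at positions i,i+1     *)
(*   Cross i : the strands at positions i, i+1 cross.                  *)

Inductive event := LCusp of nat | RCusp of nat | Cross of nat.

Definition step_strands (n : nat) (e : event) : nat :=
  match e with LCusp _ => n.+2 | RCusp _ => n - 2 | Cross _ => n end.

Fixpoint valid_from (n : nat) (w : seq event) : bool :=
  match w with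
  | [::] => n == 0
  | e :: w' =>
      match e with
      | LCusp i => (i <= n) && valid_from n.+2 w'
      | RCusp i => (i.+1 < n) && valid_from (n - 2) w'
      | Cross i => (i.+1 < n) && valid_from n w'
      end
  end.

Definition valid_front (w : seq event) : bool := valid_from 0 w.

(* number of strands in slice k (between event k-1 and event k) *)
Definition nstr (w : seq event) (k : nat) : nat := foldl step_strands 0 (take k w).

Definition evt (w : seq event) (k : nat) : event := nth (Cross 0) w k.

Definition is_lcusp w k i := if evt w k is LCusp i' then i' == i else false.
Definition is_rcusp w k i := if evt w k is RCusp i' then i' == i else false.
Definition is_cross w k i := if evt w k is Cross i' then i' == i else false.

(* strand position j in slice k continues to position j' in slice k+1
   without being involved in event k *)
Definition pass (w : seq event) (k j j' : nat) : bool :=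
  match evt w k with
  | Cross i => [&& j != i, j != i.+1 & j' == j]
  | LCusp i => if j < i then j' == j else j' == j.+2
  | RCusp i => ((j < i) && (j' == j)) || ((i.+1 < j) && (j'.+2 == j))
  end.

(* edges: the piece of strand j in slice k, for j < nstr w k.
   (nstr w k <= 2 * size w, so the bound on j loses nothing.) *)
Definition edge (w : seq event) :=
  {p : 'I_(size w).+1 * 'I_((size w).*2.+1) | (p.2 < nstr w p.1)%N}.

Definition ek (w : seq event) (e : edge w) : nat := (val e).1.
Definition ej (w : seq event) (e : edge w) : nat := (val e).2.

(* Crossing convention: at a crossing of the strands at positions i,i+1
   the strand of smaller slope, i.e. the one coming from position i+1
   and leaving at position i, is the over-strand. *)

(* e1 -> e2 are consecutive pieces of the same strand of the diagram *)
Definition next_piece (w : seq event) (e1 e2 : edge w) : bool :=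
  (ek e2 == (ek e1).+1) &&
  [|| pass w (ek e1) (ej e1) (ej e2),
      is_cross w (ek e1) (ej e2) && (ej e1 == (ej e2).+1)   (* over  *)
    | is_cross w (ek e1) (ej e1) && (ej e2 == (ej e1).+1) ]. (* under *)

(* e1, e2 are joined through a cusp (e1 the lower, e2 the upper piece) *)
Definition cusp_pair (w : seq event) (e1 e2 : edge w) : bool :=
  (ek e2 == ek e1) && (ej e2 == (ej e1).+1) &&
  ((0 < ek e1) && is_lcusp w (ek e1).-1 (ej e1) || is_rcusp w (ek e1) (ej e1)).

Definition adj (w : seq event) : rel (edge w) :=
  fun e1 e2 => [|| next_piece e1 e2, next_piece e2 e1, cusp_pair e1 e2 | cusp_pair e2 e1].

Definition is_knot_front (w : seq event) : bool :=
  valid_front w && (0 < #|{: edge w}|) && [forall e1, forall e2, connect (@adj w) e1 e2].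

(* orientations: o e = true iff the piece e is oriented left-to-right *)
Definition orientation (w : seq event) (o : edge w -> bool) : bool :=
  [forall e1, forall e2,
     (next_piece e1 e2 ==> (o e1 == o e2)) &&
     (cusp_pair e1 e2 ==> (o e1 != o e2))].

(* Colors are put on the pieces of strands; they must be constant along *)
(* semi-arcs, which is the same as coloring the semi-arcs.             *)

Definition coloring (X : finType) (op : X -> X -> X) (u d : X -> X)
  (w : seq event) (o : edge w -> bool) (f : {ffun edge w -> X}) : bool :=
  [forall e1, forall e2,
    (* no change along a strand not passing under a crossing *)
    ((ek e2 == (ek e1).+1) &&
      (pass w (ek e1) (ej e1) (ej e2) ||
       is_cross w (ek e1) (ej e2) && (ej e1 == (ej e2).+1))
       ==> (f e1 == f e2)) &&
    (* cusps: f upper = u (f lower) when traversed upward,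
              f lower = d (f upper) when traversed downward *)
    ((ek e2 == ek e1) && (ej e2 == (ej e1).+1) &&
       (0 < ek e1) && is_lcusp w (ek e1).-1 (ej e1)
       ==> (if o e1 then f e1 == d (f e2) else f e2 == u (f e1))) &&
    ((ek e2 == ek e1) && (ej e2 == (ej e1).+1) && is_rcusp w (ek e1) (ej e1)
       ==> (if o e1 then f e2 == u (f e1) else f e1 == d (f e2)))] &&
  (* crossings: e1 = under piece on the left, e2 = under piece on the
     right, e3 = incoming piece of the over strand (color y).  If the
     over strand goes right (down-right), e1 lies on its right side. *)
  [forall e1, forall e2, forall e3,
    [&& ek e2 == (ek e1).+1, ek e3 == ek e1, is_cross w (ek e1) (ej e1),
        ej e2 == (ej e1).+1 & ej e3 == (ej e1).+1]
    ==> (if o e3 then f e2 == op (f e1) (f e3) else f e1 == op (f e2) (f e3))].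

Definition Col (X : finType) (op : X -> X -> X) (u d : X -> X)
  (w : seq event) (o : edge w -> bool) : nat :=
  #|[set f : {ffun edge w -> X} | coloring op u d o f]|.

(* Main.v *)
Require Import Defs.
From mathcomp Require Import all_boot.

Lemma order_le_iter (T : finType) (f : T -> T) x i :
  0 < i -> iter i f x = x -> order f x <= i.
Proof.
move=> i0 Hx; rewrite leqNgt; apply/negP => lt.
have := findex_iter lt; rewrite Hx /findex /orbit -orderSpred /= eqxx => i0'.
by rewrite -i0' in i0.
Qed.

Section S.
Variables (X : finType) (op : X -> X -> X) (u d : X -> X).
Hypothesis HX : is_GLrack op u d.

Lemma diag_inj : injective (diag op).
Proof.
case: HX => _ H _ _ x y Hxy.
by rewrite -(proj1 (H x)) -(proj1 (H y)); move: Hxy; rewrite /diag => ->.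
Qed.

Lemma diag_d x : diag op (d x) = d (diag op x).
Proof.
case: HX => _ _ H1 H2; rewrite /diag (proj2 (H1 x x)).
by rewrite (proj2 (H2 (d x) x)).
Qed.

Lemma diag_u x : diag op (u x) = u (diag op x).
Proof.
case: HX => _ _ H1 H2; rewrite /diag (proj1 (H1 x x)).
by rewrite (proj1 (H2 (u x) x)).
Qed.


Lemma op_diag z y : op z (diag op y) = op z y.
Proof.
case: HX => [[Hb Hd]] _ _ _; rewrite /diag.
have [g gK Kg] := Hb y.
by rewrite -(Kg z) -Hd.
Qed.

Lemma diag_op a y : diag op (op a y) = op (diag op a) (diag op y).
Proof.
case: HX => [[Hb Hd]] _ _ _; rewrite op_diag /diag -Hd //.
Qed.

Variables (w : seq event) (o : edge w -> bool).

Definition F (g : {ffun edge w -> X}) : {ffun edge w -> X} := [ffun e => diag op (g e)].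

Lemma F_inj : injective F.
Proof.
move=> g h /ffunP H; apply/ffunP => e; apply: diag_inj; have := H e; by rewrite !ffunE.
Qed.

Lemma iterF k g : iter k F g = [ffun e => iter k (diag op) (g e)].
Proof.
elim: k => [|k IH] /=; first by apply/ffunP => e; rewrite ffunE.
by rewrite IH; apply/ffunP => e; rewrite !ffunE.
Qed.

Lemma col_F g : coloring op u d o g -> coloring op u d o (F g).
Proof.
move=> /andP[/forallP H1 /forallP H2]; apply/andP; split;
  apply/forallP => e1; apply/forallP => e2.
- move: (forallP (H1 e1) e2) => /andP[/andP[A B] C].
  rewrite !ffunE; apply/andP; split; first (apply/andP; split).
  + by apply/implyP => h; move/eqP: (implyP A h) => ->.
  + apply/implyP => h; move: (implyP B h); case: (o e1) => /eqP ->.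
    * by rewrite diag_d.
    * by rewrite diag_u.
  + apply/implyP => h; move: (implyP C h); case: (o e1) => /eqP ->.
    * by rewrite diag_u.
    * by rewrite diag_d.
- apply/forallP => e3; move: (forallP (forallP (H2 e1) e2) e3) => A.
  rewrite !ffunE; apply/implyP => h; move: (implyP A h).
  by case: (o e3) => /eqP ->; rewrite diag_op.
Qed.

Lemma col_iter k g : coloring op u d o g -> coloring op u d o (iter k F g).
Proof. by elim: k => [|k IH] //= H; apply: col_F; apply: IH. Qed.

End S.

Theorem corollary3p12 (X : finType) (op : X -> X -> X) (u d : X -> X) (c : nat)
  (HX : is_GLrack op u d) (Hblock : block_GLrack_of_size op c)
  (w : seq event) (Hw : is_knot_front w)
  (o : edge w -> bool) (Ho : orientation o) :
  (c %| Col op u d o)%N.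
Proof.
have injF := @F_inj X op u d HX w.
have [e0 _] : exists e0 : edge w, true.
  move: Hw => /andP[/andP[_ H] _]; have [e0 _] := card_gt0P H; by exists e0.
rewrite /Col -(fcard_order_set injF (n := c)); first exact: dvdn_mull.
- apply/subsetP => g _; rewrite inE; apply/eqP.
  have c0 : 0 < c by rewrite -(Hblock (g e0)) order_gt0.
  apply/eqP; rewrite eqn_leq; apply/andP; split.
  + apply: order_le_iter => //; rewrite iterF; apply/ffunP => e.
    by rewrite ffunE -{1}(Hblock (g e)) (iter_order (@diag_inj X op u d HX)).
  + rewrite -(Hblock (g e0)); apply: order_le_iter; first exact: order_gt0.
    have := iter_order injF g; rewrite iterF => /ffunP /(_ e0); rewrite ffunE.
    by [].
- move=> x y /eqP <-; rewrite !inE; apply/idP/idP; first exact: col_F.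
  move=> H; rewrite -(finv_f injF x); exact: col_iter.
Qed.
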